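(* Let $G$ be a directed $st$-graph and let $b$ be a critical node of $G$. Then every $b$-minimal minimal vertex separator of $G$ is $b$-critical.
   Context: A directed $st$-graph $G=(V,E,s,t)$ is a finite directed graph with no self-loops and no parallel edges, with distinct source $s$ (no incoming edges) and sink $t$ (no outgoing edges), such that every vertex lies on some directed walk from $s$ to $t$. A vertex separator is a set $T\subseteq V$ meeting every $s$–$t$ walk; an mvs is an inclusion-minimal one. For $u\in V$, $A\subseteq V$: $u\sqsubseteq A$ if every directed walk from $u$ to $t$ contains a vertex of $A$; $A\sqsubseteq A'$ if $u\sqsubseteq A'$ for all $u\in A$; $A\sqsubset A'$ means $A\sqsubseteq A'$ and $A\neq A'$. An mvs $T$ is $b$-critical if $b\in T$ and there is $a\in T$ (possibly $a=b$) with a directed walk of length at least one from $a$ to $b$; $b$ is a critical node if some mvs is $b$-critical. An mvs $T$ is $b$-minimal if $b\in T$ and $b\notin T'$ for every mvs $T'$ with $T'\sqsubset T$. *)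

(* Defs.v *)
(* Directed graphs on a finite vertex type V with edge
   relation E : rel V (a relation has no parallel edges by construction). *)
From mathcomp Require Import all_boot.
Set Implicit Arguments. Unset Strict Implicit. Unset Printing Implicit Defensive.

Section STGraph.
Variable V : finType.
Variable E : rel V.

(* A directed walk from u to v: the vertex sequence u :: p is an E-path
   ending in v.  Its length is size p. *)
Definition walk (u v : V) (p : seq V) : bool := path E u p && (last u p == v).

Definition st_graph (s t : V) : Prop :=
  [/\ irreflexive E, s != t,
      (forall x, ~~ E x s), (forall y, ~~ E t y) &
      (forall v : V, exists p : seq V, walk s t p && (v \in s :: p))].

Definition vsep (s t : V) (T : {set V}) : Prop :=
  forall p, walk s t p -> has (mem T) (s :: p).

Definition mvs (s t : V) (T : {set V}) : Prop :=
  vsep s t T /\ (forall T' : {set V}, T' \subset T -> vsep s t T' -> T' = T).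

Definition vle (t : V) (u : V) (A : {set V}) : Prop :=
  forall p, walk u t p -> has (mem A) (u :: p).

Definition sle (t : V) (A A' : {set V}) : Prop :=
  forall u, u \in A -> vle t u A'.

Definition slt (t : V) (A A' : {set V}) : Prop := sle t A A' /\ A <> A'.

Definition b_critical (s t b : V) (T : {set V}) : Prop :=
  [/\ mvs s t T, b \in T &
      exists a, a \in T /\ exists p, size p >= 1 /\ walk a b p].

Definition critical_node (s t b : V) : Prop :=
  exists T : {set V}, b_critical s t b T.

Definition b_minimal (s t b : V) (T : {set V}) : Prop :=
  [/\ mvs s t T, b \in T &
      forall T' : {set V}, mvs s t T' -> slt t T' T -> b \notin T'].

End STGraph.

(* Main.v *)
From Stdlib Require Import Classical ClassicalEpsilon.
Require Import Defs.
From mathcomp Require Import all_boot.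

Set Implicit Arguments. Unset Strict Implicit. Unset Printing Implicit Defensive.

Definition decP (P : Prop) : bool :=
  if excluded_middle_informative P then true else false.

Lemma decPE (P : Prop) : decP P = true <-> P.
Proof. by rewrite /decP; case: excluded_middle_informative. Qed.

Section Aux.
Variable V : finType.
Variable E : rel V.

Lemma first_hit (A : {set V}) x p :
  path E x p -> has (mem A) (x :: p) ->
  exists p1, [/\ path E x p1, last x p1 \in x :: p, last x p1 \in A &
                 ~~ has (mem A) (belast x p1)].
Proof.
elim: p x => [|z p IH] x /=.
  rewrite orbF => _ Hx; exists [::]; split => //=; rewrite inE ?eqxx //.
move=> /andP[Exz Hp] /orP[Hx|Hh].
  exists [::]; split => //=; rewrite ?inE ?eqxx //.
case: (boolP (x \in A)) => Hx.
  exists [::]; split => //=; rewrite ?inE ?eqxx //.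
have [p1 [P1 L1 A1 B1]] := IH z Hp Hh.
exists (z :: p1); split => /=.
- by rewrite Exz.
- by rewrite inE L1 orbT.
- done.
- by rewrite negb_or B1 andbT.
Qed.

Lemma last_hit (A : {set V}) x p :
  path E x p -> has (mem A) (x :: p) ->
  exists y q, [/\ y \in x :: p, y \in A, path E y q, last y q = last x p &
                 ~~ has (mem A) q].
Proof.
elim: p x => [|z p IH] x /=.
  rewrite orbF => _ Hx; exists x, [::]; split => //=; rewrite ?inE ?eqxx //.
move=> /andP[Exz Hp] H.
case: (boolP (has (mem A) (z :: p))) => Hh.
  have [y [q [Y1 Y2 Y3 Y4 Y5]]] := IH z Hp Hh.
  exists y, q; split => //; by rewrite inE Y1 orbT.
have Hx : x \in A.
  move: H; rewrite /= in Hh; case/orP => //; by rewrite (negbTE Hh).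
exists x, (z :: p); split => //=; rewrite ?inE ?eqxx ?Exz ?Hp //.
Qed.

Lemma belast_suffix x p y :
  path E x p -> y \in belast x p ->
  exists p2, [/\ 0 < size p2, path E y p2 & last y p2 = last x p].
Proof.
elim: p x => [|z p IH] x //=.
move=> /andP[Exz Hp]; rewrite inE; case/orP => [/eqP->|Hy].
  by exists (z :: p); rewrite /= Exz Hp.
exact: IH.
Qed.

Lemma has_walk_cat (A : {set V}) s r u p :
  last s r = u -> has (mem A) (s :: r ++ p) =
  has (mem A) (belast s r) || has (mem A) (u :: p).
Proof.
move=> Hl; rewrite -cat_cons lastI Hl cat_rcons has_cat //.
Qed.

Variables s t : V.

Lemma mvs_witness (T : {set V}) x :
  mvs E s t T -> x \in T ->
  (exists p, walk E s x p /\ ~~ has (mem T) (belast s p)) /\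
  (exists q, walk E x t q /\ ~~ has (mem T) q).
Proof.
move=> [HT Hmin] Hx.
have Hns : ~ vsep E s t (T :\ x).
  move=> Hv; have := Hmin _ (subD1set T x) Hv => Heq.
  by move: Hx; rewrite -Heq setD11.
have [r Hr] : exists r, ~ (walk E s t r -> has (mem (T :\ x)) (s :: r)).
  by apply: not_all_ex_not.
have Hw : walk E s t r by apply: NNPP => Hw; apply: Hr.
have Hnh : ~~ has (mem (T :\ x)) (s :: r).
  by apply/negP => Hh; apply: Hr.
have HhT := HT r Hw.
move: (Hw) => /andP[Hp /eqP Hl].
have onlyx : forall y, y \in s :: r -> y \in T -> y = x.
  move=> y Yin YT; apply/eqP; apply: contraNT Hnh => Hyx.
  apply/hasP; exists y => //; by rewrite !inE Hyx YT.
split.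
  have [p1 [P1 L1 A1 B1]] := first_hit Hp HhT.
  exists p1; split => //; rewrite /walk P1 /=; apply/eqP; exact: onlyx.
have [y [q [Y1 Y2 Y3 Y4 Y5]]] := last_hit Hp HhT.
have Hyx := onlyx _ Y1 Y2; subst y.
exists q; split => //; by rewrite /walk Y3 Y4 Hl /=.
Qed.

Definition Mset (U : {set V}) : {set V} :=
  [set x in U | decP (exists p, walk E s x p /\ ~~ has (mem U) (belast s p))].

Lemma inM U x : x \in Mset U <->
  x \in U /\ exists p, walk E s x p /\ ~~ has (mem U) (belast s p).
Proof.
rewrite inE; split.
  by case/andP => -> /decPE.
by case=> -> H; rewrite /= (proj2 (decPE _) H).
Qed.

Lemma M_vsep U : vsep E s t U -> vsep E s t (Mset U).
Proof.
move=> HU r Hw; have Hh := HU r Hw.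
move: (Hw) => /andP[Hp _].
have [p1 [P1 L1 A1 B1]] := first_hit Hp Hh.
apply/hasP; exists (last s p1) => //.
apply/inM; split => //; exists p1; by rewrite /walk P1 eqxx.
Qed.

Lemma nhas_sub (A B : {set V}) l : A \subset B -> ~~ has (mem B) l -> ~~ has (mem A) l.
Proof.
move=> /subsetP sAB /hasPn H; apply/hasPn => y Hy; apply/negP => yA.
by move: (H y Hy); rewrite /= (sAB y yA).
Qed.

Lemma nhas_U (A B : {set V}) l : ~~ has (mem A) l -> ~~ has (mem B) l -> ~~ has (mem (A :|: B)) l.
Proof.
move=> /hasPn HA /hasPn HB; apply/hasPn => y Hy.
by rewrite /= inE negb_or (HA y Hy) (HB y Hy).
Qed.

Lemma vsep_sub (A B : {set V}) : A \subset B -> vsep E s t A -> vsep E s t B.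
Proof.
move=> /subsetP sAB HA p Hp; have /hasP [y Y1 Y2] := HA p Hp.
apply/hasP; exists y => //; exact: sAB.
Qed.

Lemma walk_cat x y z p q : walk E x y p -> walk E y z q -> walk E x z (p ++ q).
Proof.
move=> /andP[Pp /eqP Lp] /andP[Pq Lq].
by rewrite /walk cat_path last_cat Lp Pp Pq Lq.
Qed.

Lemma M_min_aux (U T1 T' : {set V}) x : mvs E s t T1 -> T1 \subset U ->
  x \in T1 -> x \in Mset U -> x \notin T' -> T' \subset Mset U ->
  vsep E s t T' -> False.
Proof.
move=> HT1 sT1U xT1 /inM [xU [r [Wr Br]]] xT' /subsetP sTM HT'.
have [_ [q [Wq Bq]]] := mvs_witness HT1 xT1.
have := HT' _ (walk_cat Wr Wq).
move: (Wr) => /andP[_ /eqP Lr].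
rewrite (has_walk_cat _ _ Lr).
apply/negP; rewrite negb_or; apply/andP; split.
  apply: nhas_sub Br; apply/subsetP => y /sTM /inM []//.
rewrite /= (negbTE xT') /=; apply/hasPn => y Yq; apply/negP => yT'.
have /inM [yU [r' [Wr' Br']]] := sTM y yT'.
move: Wq => /andP[Pq /eqP Lq].
case/splitPr: Yq Pq Lq Bq => q1 q2.
rewrite cat_path last_cat /= => /and3P[_ _ Pq2] Lq2.
rewrite has_cat /= !negb_or => /and3P[_ yT1 Bq2].
have Wyt : walk E y t q2 by rewrite /walk Pq2 Lq2 eqxx.
have := (proj1 HT1) _ (walk_cat Wr' Wyt).
move: (Wr') => /andP[_ /eqP Lr'].
rewrite (has_walk_cat _ _ Lr') /= (negbTE yT1) (negbTE Bq2) /= orbF.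
apply/negP; exact: nhas_sub Br'.
Qed.

End Aux.

Theorem theorem3 (V : finType) (E : rel V) (s t b : V) :
  st_graph E s t ->
  critical_node E s t b ->
  forall T : {set V}, b_minimal E s t b T -> b_critical E s t b T.
Proof.
move=> _ [T0 [HT0 bT0 [a0 [a0T0 [q [Hq Wq]]]]]] T [HT bT Hmin].
split => //.
apply: NNPP => Hno.
have noT : forall a p, a \in T -> 0 < size p -> walk E a b p -> False.
  move=> a p aT sp wp; apply: Hno; exists a; split => //; exists p; split => //.
have noTb : forall x p, walk E x b p -> ~~ has (mem T) (belast x p).
  move=> x p /andP[Pp /eqP Lp]; apply/hasPn => y Hy; apply/negP => yT.
  have [p2 [S2 P2 L2]] := belast_suffix Pp Hy.
  by apply: (noT y p2 yT S2); rewrite /walk P2 L2 Lp eqxx.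
set U := T :|: T0.
set M := Mset E s U.
have sTU : T \subset U by apply: subsetUl.
have sT0U : T0 \subset U by apply: subsetUr.
have bM : b \in M.
  have [[p [Wp Bp]] _] := mvs_witness HT0 bT0.
  apply/inM; split; first by rewrite inE bT.
  exists p; split => //; apply: nhas_U => //; exact: noTb.
have a0M : a0 \in M.
  have [[p [Wp Bp]] _] := mvs_witness HT0 a0T0.
  apply/inM; split; first by rewrite inE a0T0 orbT.
  exists p; split => //; apply: nhas_U => //.
  move: (Wp) => /andP[Pp /eqP Lp]; apply/hasPn => y Hy; apply/negP => yT.
  have [p2 [S2 P2 L2]] := belast_suffix Pp Hy.
  have W2 : walk E y a0 p2 by rewrite /walk P2 L2 Lp eqxx.
  apply: (noT y (p2 ++ q) yT); last exact: walk_cat W2 Wq.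
  by rewrite size_cat (leq_trans S2) // leq_addr.
have a0T : a0 \notin T by apply/negP => a0T; exact: (noT a0 q a0T Hq Wq).
have HM : mvs E s t M.
  split; first by apply: M_vsep; apply: vsep_sub sTU (proj1 HT).
  move=> T' sT'M HT'; apply/eqP; rewrite eqEsubset sT'M /=.
  apply/subsetP => x xM; case: (boolP (x \in T')) => // xT'; exfalso.
  have /inM [xU _] := xM.
  move: xU; rewrite inE => /orP [xT | xT0].
    exact: (M_min_aux HT sTU xT xM xT' sT'M HT').
  exact: (M_min_aux HT0 sT0U xT0 xM xT' sT'M HT').
have sMT : sle E t M T.
  move=> u uM p Wp.
  case: (boolP (u \in T)) => uT; first by rewrite /= uT.
  have /inM [_ [r [Wr Br]]] := uM.
  have := (proj1 HT) _ (walk_cat Wr Wp).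
  move: (Wr) => /andP[_ /eqP Lr].
  rewrite (has_walk_cat _ _ Lr) (negbTE (nhas_sub sTU Br)) //.
have Hs : slt E t M T.
  split => // eMT; move: a0M; by rewrite eMT (negbTE a0T).
by move: (Hmin M HM Hs); rewrite bM.
Qed.
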